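(* For every integer $d\ge 1$ and real $C\ge 1$, the class $\mathcal{D}^d(C)$ has asymptotic dimension at most $d$.
   Context: $\mathcal{D}^d(C)$ is the class of finite graphs $G$ whose vertices can be mapped to points of $\mathbb{R}^d$ such that any two distinct vertices are mapped to points at Euclidean distance at least $1$, and any two adjacent vertices are mapped to points at Euclidean distance at most $C$. Graphs are metric spaces with the shortest-path distance. For a metric space $(X,d)$, a family $\mathcal U$ of subsets is $D$-bounded if every member has diameter at most $D$, and $r$-disjoint if points in different members are at distance $>r$. A function $D:\mathbb{R}^+\to\mathbb{R}^+$ is an $n$-dimensional control function for $X$ if for every $r>0$ there is a cover $\mathcal U=\mathcal U_1\cup\dots\cup\mathcal U_{n+1}$ of $X$ with each $\mathcal U_i$ $r$-disjoint and each member $D(r)$-bounded; a class has asymptotic dimension at most $n$ if one such function works for all its members. *)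

(* Defs.v *)
From HB Require Import structures.
From mathcomp Require Import all_boot all_order all_algebra.
From Stdlib Require Import Rdefinitions.
From mathcomp Require Import reals Rstruct.
Set Implicit Arguments. Unset Strict Implicit. Unset Printing Implicit Defensive.
Import Order.TTheory GRing.Theory Num.Theory.
Local Open Scope ring_scope.

Definition simple_graph (T : finType) (e : rel T) : Prop :=
  symmetric e /\ irreflexive e.

Definition walk (T : finType) (e : rel T) (n : nat) (x y : T) : Prop :=
  exists p : seq T, [/\ path e x p, last x p = y & size p = n].

(* Shortest-path distance d_G(x,y) <= D  (D real; infinite distance between
   different components is never <= D). *)
Definition gdist_le (T : finType) (e : rel T) (x y : T) (D : R) : Prop :=
  exists n : nat, walk e n x y /\ (n%:R <= D).

Definition gdist_gt (T : finType) (e : rel T) (x y : T) (r : R) : Prop :=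
  forall n : nat, walk e n x y -> r < n%:R.

Definition bounded_family (T : finType) (e : rel T) (D : R)
    (U : {set {set T}}) : Prop :=
  forall A, A \in U -> forall x y, x \in A -> y \in A -> gdist_le e x y D.

Definition disjoint_family (T : finType) (e : rel T) (r : R)
    (U : {set {set T}}) : Prop :=
  forall A B, A \in U -> B \in U -> A != B ->
  forall x y, x \in A -> y \in B -> gdist_gt e x y r.

Definition eucl_dist (d : nat) (u v : 'rV[R]_d) : R :=
  Num.sqrt (\sum_(i < d) (u ord0 i - v ord0 i) ^+ 2).

Definition in_Dclass (d : nat) (C : R) (T : finType) (e : rel T) : Prop :=
  exists f : T -> 'rV[R]_d,
    (forall x y, x != y -> 1 <= eucl_dist (f x) (f y)) /\
    (forall x y, e x y -> eucl_dist (f x) (f y) <= C).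

Definition control_function (n : nat) (D : R -> R)
    (T : finType) (e : rel T) : Prop :=
  forall r : R, 0 < r ->
  exists U : 'I_n.+1 -> {set {set T}},
    (forall x : T, exists i, exists2 A, A \in U i & x \in A) /\
    (forall i, disjoint_family e r (U i) /\ bounded_family e (D r) (U i)).

Definition asdim_class_le (n : nat)
    (P : forall T : finType, rel T -> Prop) : Prop :=
  exists D : R -> R, (forall r, 0 < r -> 0 < D r) /\
    forall (T : finType) (e : rel T),
      simple_graph e -> P T e -> control_function n D e.

(* Main.v *)
Require Import Defs.
From HB Require Import structures.
From mathcomp Require Import all_boot all_order all_algebra.
From Stdlib Require Import Rdefinitions.
From mathcomp Require Import reals Rstruct.
From mathcomp Require Import boolp.
From mathcomp Require Import zify ring lra.
Set Implicit Arguments. Unset Strict Implicit. Unset Printing Implicit Defensive.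
Import Order.TTheory GRing.Theory Num.Theory.
Local Open Scope ring_scope.

Lemma coord_le_eucl d (u v : 'rV[R]_d) i :
  `|u ord0 i - v ord0 i| <= eucl_dist u v.
Proof.
rewrite /eucl_dist -sqrtr_sqr.
rewrite ler_sqrt; last by rewrite sumr_ge0 // => j _; rewrite sqr_ge0.
rewrite (bigD1 i) //= lerDl sumr_ge0 // => j _; exact: sqr_ge0.
Qed.

Lemma walk0 (T : finType) (e : rel T) x : walk e 0 x x.
Proof. by exists [::]. Qed.

Lemma walk_cat (T : finType) (e : rel T) a b x y z :
  walk e a x y -> walk e b y z -> walk e (a + b) x z.
Proof.
move=> [p [hp lp sp]] [q [hq lq sq]]; exists (p ++ q); split.
- by rewrite cat_path hp lp hq.
- by rewrite last_cat lp.
- by rewrite size_cat sp sq.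
Qed.

Lemma walk_rev (T : finType) (e : rel T) n x y :
  symmetric e -> walk e n x y -> walk e n y x.
Proof.
move=> se [p [hp lp sp]]; subst y n.
elim: p x hp => [|z p IH] x /=; first by move=> _; exact: walk0.
case/andP=> exz hp.
have [q [hq lq sq]] := IH z hp.
exists (rcons q x); split.
- by rewrite rcons_path hq lq se.
- by rewrite last_rcons.
- by rewrite size_rcons sq.
Qed.

Lemma walk_coord (T : finType) (e : rel T) d (f : T -> 'rV[R]_d) C n x y i :
  (forall x y, e x y -> eucl_dist (f x) (f y) <= C) -> walk e n x y ->
  `|f x ord0 i - f y ord0 i| <= n%:R * C.
Proof.
move=> hC [p [hp lp sp]]; subst y n.
elim: p x hp => [|z p IH] x /=; first by move=> _; rewrite subrr normr0 mul0r.
case/andP=> exz hp.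
have h1 := IH z hp.
have h2 : `|f x ord0 i - f z ord0 i| <= C.
  by apply: le_trans (coord_le_eucl _ _ _) (hC _ _ exz).
have -> : f x ord0 i - f (last z p) ord0 i =
  (f x ord0 i - f z ord0 i) + (f z ord0 i - f (last z p) ord0 i).
  by rewrite addrA subrK.
apply: le_trans (ler_normD _ _) _.
rewrite mulrSr mulrDl mul1r.
 rewrite [X in _ <= X]addrC; exact: lerD h2 h1.
Qed.


Definition Kp (L : R) (d : nat) : nat := (Num.truncn (L * (d.+1)%:R)).+1.

Lemma floor_diff_bounds (a b : R) (K : nat) :
  `|a - b| < K%:R ->
  (- (K%:Z) <= Num.floor a - Num.floor b <= K%:Z).
Proof.
move=> h.
have h1 := floor_le a. have h2 := floorD1_gt a.
have h3 := floor_le b. have h4 := floorD1_gt b.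
rewrite intrD in h2. rewrite intrD in h4.
set A := Num.floor a in h1 h2 *. set B := Num.floor b in h3 h4 *.
have hl : - (K%:R) - 1 < (A - B)%:~R :> R.
  rewrite intrB. move: h; rewrite ltr_norml => /andP [h5 h6]. lra.
have hr : (A - B)%:~R < (K%:R + 1) :> R.
  rewrite intrB. move: h; rewrite ltr_norml => /andP [h5 h6]. lra.
have hl' : (- (K%:Z) - 1 < A - B).
  rewrite -(ltr_int R) !intrB. rewrite intrN -pmulrn -intrB. lra.
have hr' : (A - B < K%:Z + 1).
  rewrite -(ltr_int R) intrD -pmulrn. lra.
apply/andP; split; lia.
Qed.

Lemma floor_eq_close (a b : R) : Num.floor a = Num.floor b -> `|a - b| < 1.
Proof.
move=> e.
have h1 := floor_le a. have h2 := floorD1_gt a.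
have h3 := floor_le b. have h4 := floorD1_gt b.
rewrite intrD in h2. rewrite intrD in h4. rewrite e in h1 h2.
rewrite ltr_norml; apply/andP; split; lra.
Qed.

Lemma eucl_lt1 d (u v : 'rV[R]_d) :
  (forall i, `|(u ord0 i - v ord0 i) * (d.+1)%:R| < 1) -> eucl_dist u v < 1.
Proof.
move=> h.
have hd : 0 < (d.+1)%:R :> R by rewrite ltr0n.
set c := ((d.+1)%:R : R)^-1.
have hc0 : 0 < c by rewrite invr_gt0.
have hc1 : c * (d.+1)%:R = 1 by rewrite mulVf // gt_eqF.
have hs : \sum_(i < d) (u ord0 i - v ord0 i) ^+ 2 <= \sum_(i < d) c.
  apply: ler_sum => i _.
  have := h i; rewrite normrM (ger0_norm (ltW hd)) => hi.
  have hx : `|u ord0 i - v ord0 i| < c.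
    by rewrite -(ltr_pM2r hd) hc1.
  have hc : c <= 1.
    rewrite invr_le1 ?ler1n //; last by rewrite unitfE gt_eqF.
  rewrite -real_normK ?num_real //.
  have ht := normr_ge0 (u ord0 i - v ord0 i).
  move: hx ht; set t := `|_| => hx ht.
  have h' : 0 <= t * (1 - t) by apply: mulr_ge0; lra.
  nra.
rewrite /eucl_dist -sqrtr1 ltr_sqrt ?ltr01 //.
apply: le_lt_trans hs _.
rewrite sumr_const card_ord -mulr_natr.
have := hc1; rewrite -natr1 mulrDr mulr1 => hh.
lra.
Qed.

Lemma packing (T : finType) d (f : T -> 'rV[R]_d) (S : seq T) (p : 'rV[R]_d) (L : R) :
  uniq S ->
  (forall z z', z \in S -> z' \in S -> z != z' -> 1 <= eucl_dist (f z) (f z')) ->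
  (forall z i, z \in S -> `|f z ord0 i - p ord0 i| <= L) ->
  leq (size S) (expn (muln 2 (Kp L d)).+1 d).
Proof.
move=> uS hsep hbd.
set K := Kp L d.
have hd : 0 < (d.+1)%:R :> R by rewrite ltr0n.
pose q z i : int := Num.floor (f z ord0 i * (d.+1)%:R) - Num.floor (p ord0 i * (d.+1)%:R).
have qb : forall z i, z \in S -> - (K%:Z) <= q z i <= K%:Z.
  move=> z i zS; apply: floor_diff_bounds.
  rewrite -mulrBl normrM (ger0_norm (ltW hd)).
  apply: (@le_lt_trans _ _ (L * (d.+1)%:R)).
  - by rewrite ler_pM2r // hbd.
  - rewrite /K /Kp. exact: truncnS_gt.
pose g z : {ffun 'I_d -> 'I_(muln 2 K).+1} := [ffun i => inord (absz (q z i + K%:Z))].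
have ginj : {in S &, injective g}.
  move=> z z' zS z'S /ffunP egz.
  apply/eqP; apply: contraT => nz.
  have := hsep z z' zS z'S nz; rewrite leNgt => /negP hh; exfalso; apply: hh.
  apply: eucl_lt1 => i.
  have := egz i; rewrite !ffunE.
  have := qb z i zS; have := qb z' i z'S => h1 h2 eq.
  have eq2 : q z i = q z' i.
    move/(congr1 val): eq; rewrite /= !inordK; lia.
  have : Num.floor (f z ord0 i * (d.+1)%:R) = Num.floor (f z' ord0 i * (d.+1)%:R).
    move: eq2; rewrite /q => ?; lia.
  by move/floor_eq_close; rewrite mulrBl.
have := uS; rewrite -(map_inj_in_uniq ginj) => /card_uniqP hc.
rewrite -(size_map g) -hc. apply: leq_trans (max_card _) _.
by rewrite card_ffun !card_ord.
Qed.


Definition sh (m : R) (k : nat) := (k%:Z)%:~R * (2 * m).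


Definition good (m L : R) (k : nat) (t : R) : bool :=
  let z := t - sh m k in let a := Num.floor (z / L) in
  (a%:~R * L + m <= z) && (z <= a%:~R * L + L - m).

Lemma floor_mul_bounds (z L : R) : 0 < L ->
  (Num.floor (z / L))%:~R * L <= z < (Num.floor (z / L))%:~R * L + L.
Proof.
move=> L0; set a := Num.floor (z / L).
have h1 := floor_le (z / L). have h2 := floorD1_gt (z / L).
rewrite intrD in h2.
rewrite -/a in h1 h2.
apply/andP; split.
- by rewrite -ler_pdivlMr.
- by rewrite -{2}(mul1r L) -mulrDl -ltr_pdivrMr.
Qed.

Lemma bad_near (m L : R) (k : nat) (t : R) : 0 < L -> ~~ good m L k t ->
  exists b : int, `|t - sh m k - b%:~R * L| < m.
Proof.
move=> L0; rewrite /good.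
set z := t - sh m k. have := floor_mul_bounds z L0.
set a := Num.floor (z / L) => /andP [h1 h2].
rewrite negb_and -!ltNge => /orP [h|h].
- exists a; rewrite ger0_norm; lra.
- exists (a + 1); rewrite intrD mulrDl mul1r ler0_norm; lra.
Qed.

Lemma one_bad (d : nat) (m : R) (k1 k2 : nat) (t : R) : 0 < m -> leq k1 d -> leq k2 d -> k1 != k2 ->
  good m (2 * m * ((d.+1)%:Z)%:~R) k1 t || good m (2 * m * ((d.+1)%:Z)%:~R) k2 t.
Proof.
move=> m0 hk1 hk2 nk; set L := 2 * m * ((d.+1)%:Z)%:~R.
have L0 : 0 < L.
  rewrite /L; apply: mulr_gt0; first lra. by rewrite -pmulrn ltr0n.
apply: contraT; rewrite negb_or => /andP [/(bad_near L0) [b1 hb1] /(bad_near L0) [b2 hb2]].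
set N : int := k2%:Z - k1%:Z + (b2 - b1) * (d.+1)%:Z.
have eN : (t - sh m k1 - b1%:~R * L) - (t - sh m k2 - b2%:~R * L) = 2 * m * N%:~R.
  rewrite /N /sh /L intrD intrB !intrM intrB /=. ring.
have hN : (N <= -1) \/ (1 <= N).
  have : N != 0.
    apply/eqP => N0. move/eqP: nk; apply. rewrite /N in N0.
    move: N0; set c := b2 - b1 => N0.
    have [c0|[c1|c2]] : c = 0 \/ (1 <= c \/ c <= -1) by lia.
    - rewrite c0 mul0r addr0 in N0. lia.
    - have : 0 <= (c - 1) * (d.+1)%:Z by apply: mulr_ge0; lia.
      rewrite mulrBl mul1r. lia.
    - have : 0 <= (- c - 1) * (d.+1)%:Z by apply: mulr_ge0; lia.
      rewrite mulrBl mul1r mulNr. lia.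
  lia.
have : `|2 * m * N%:~R| < 2 * m.
  rewrite -eN. apply: le_lt_trans (ler_normB _ _) _. lra.
case: hN => hN.
- have : N%:~R <= -1 :> R by rewrite -(ler_int R) in hN.
  set X := N%:~R. move=> hX. rewrite ler0_norm; first nra. nra.
- have : 1 <= N%:~R :> R by rewrite -(ler_int R) in hN.
  set X := N%:~R. move=> hX. rewrite ger0_norm; first nra. nra.
Qed.

Lemma exists_good (d : nat) (m : R) (y : 'rV[R]_d) : 0 < m ->
  exists k : 'I_d.+1, forall i : 'I_d, good m (2 * m * ((d.+1)%:Z)%:~R) k (y ord0 i).
Proof.
move=> m0.
set L := 2 * m * ((d.+1)%:Z)%:~R.
case: (boolP [exists k : 'I_d.+1, [forall i : 'I_d, good m L k (y ord0 i)]]).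
  by move=> /existsP [k /forallP h]; exists k.
rewrite negb_exists => /forallP H.
have ex : forall k : 'I_d.+1, exists i : 'I_d, ~~ good m L k (y ord0 i).
  by move=> k; have := H k; rewrite negb_forall => /existsP.
pose g k := xchoose (ex k).
have ginj : injective g.
  move=> k1 k2 e; apply/eqP; apply: contraT => nk.
  have h1 : ~~ good m L k1 (y ord0 (g k2)) by rewrite -e; exact: xchooseP (ex k1).
  have h2 : ~~ good m L k2 (y ord0 (g k2)) by exact: xchooseP (ex k2).
  have := @one_bad d m k1 k2 (y ord0 (g k2)) m0.
  rewrite -ltnS ltn_ord -ltnS ltn_ord => /(_ isT isT nk).
  by rewrite (negbTE h1) (negbTE h2).
have := leq_card g ginj; rewrite !card_ord ltnn.
by [].
Qed.

Lemma good_bounds (m L : R) (k : nat) (t : R) : 0 < L -> good m L k t ->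
  let a := Num.floor ((t - sh m k) / L) in
  (a%:~R * L + m <= t - sh m k) && (t - sh m k <= a%:~R * L + L - m).
Proof. by []. Qed.

Lemma good_sep (m L : R) (k : nat) (t1 t2 : R) : 0 < L -> good m L k t1 -> good m L k t2 ->
  Num.floor ((t1 - sh m k) / L) != Num.floor ((t2 - sh m k) / L) ->
  2 * m <= `|t1 - t2|.
Proof.
rewrite /good => L0.
move: (sh m k) => s.
set a1 := Num.floor ((t1 - s) / L).
set a2 := Num.floor ((t2 - s) / L).
move=> /andP [h1 h2] /andP [h3 h4] ne.
case: (ltgtP a1 a2) ne => // hlt _.
- have : (a1 + 1)%:~R * L <= a2%:~R * L.
    by rewrite ler_pM2r // ler_int; lia.
  rewrite intrD mulr1z mulrDl mul1r => h.
  have hh : 2 * m <= t2 - t1 by lra.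
  by apply: le_trans hh _; rewrite distrC ler_norm.
- have : (a2 + 1)%:~R * L <= a1%:~R * L.
    by rewrite ler_pM2r // ler_int; lia.
  rewrite intrD mulr1z mulrDl mul1r => h.
  have hh : 2 * m <= t1 - t2 by lra.
  by apply: le_trans hh _; rewrite ler_norm.
Qed.

Lemma good_same (m L : R) (k : nat) (t1 t2 : R) : 0 <= m -> good m L k t1 -> good m L k t2 ->
  Num.floor ((t1 - sh m k) / L) = Num.floor ((t2 - sh m k) / L) ->
  `|t1 - t2| <= L.
Proof.
rewrite /good => m0.
move: (sh m k) => s.
set a1 := Num.floor ((t1 - s) / L).
set a2 := Num.floor ((t2 - s) / L).
move=> /andP [h1 h2] /andP [h3 h4] e.
rewrite e in h1 h2.
rewrite ler_norml; apply/andP; split; lra.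
Qed.


Lemma gdist_le_sym (T : finType) (e : rel T) x y (D : R) :
  symmetric e -> gdist_le e x y D -> gdist_le e y x D.
Proof. by move=> se [n [w hn]]; exists n; split => //; apply: walk_rev. Qed.

Lemma path_key (T : finType) (K : eqType) (key : T -> K) (Rel : rel T) x q :
  (forall a b, Rel a b -> key a = key b) -> path Rel x q ->
  forall z, z \in x :: q -> key z = key x.
Proof.
move=> hk; elim: q x => [|y q IH] x /=.
  by move=> _ z; rewrite inE => /eqP ->.
case/andP=> rxy pq z; rewrite inE => /orP [/eqP -> //|zq].
by rewrite (IH y pq z zq) (hk _ _ rxy).
Qed.

Lemma path_walk (T : finType) (e : rel T) (Rel : rel T) (r : R) x q :
  (forall a b, Rel a b -> gdist_le e a b r) -> path Rel x q ->
  exists n, walk e n x (last x q) /\ n%:R <= (size q)%:R * r.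
Proof.
move=> hR; elim: q x => [|y q IH] x /=.
  by move=> _; exists 0%N; split; [exact: walk0 | rewrite mul0r].
case/andP=> rxy pq.
have [n1 [w1 h1]] := hR _ _ rxy.
have [n2 [w2 h2]] := IH y pq.
exists (n1 + n2)%N; split; first exact: walk_cat w1 w2.
by rewrite natrD mulrSr mulrDl mul1r addrC lerD.
Qed.

Definition Nb (d : nat) (C r : R) : nat :=
  expn (muln 2 (Kp (2 * (r * C) * ((d.+1)%:Z)%:~R) d)).+1 d.

Definition Dfun (d : nat) (C : R) := fun r => (Nb d C r)%:R * r + 1.

Unset Implicit Arguments.

Theorem theorem6p1 (d : nat) (C : R) :
  is_true (leq 1 d) -> 1 <= C -> asdim_class_le d (fun T e => @in_Dclass d C T e).
Proof.
move=> hd hC; exists (Dfun d C); split.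
  move=> r r0; rewrite /Dfun.
  have : 0 <= (Nb d C r)%:R * r by apply: mulr_ge0; [exact: ler0n | exact: ltW].
  lra.
move=> T e [se ie] [f [hsep hedge]] r r0.
set m := r * C.
have m0 : 0 < m by apply: mulr_gt0 => //; lra.
set L := 2 * m * ((d.+1)%:Z)%:~R.
have L0 : 0 < L.
  rewrite /L; apply: mulr_gt0; first lra. by rewrite -pmulrn ltr0n.
have ex : forall x, exists k : 'I_d.+1, [forall i, good m L k (f x ord0 i)].
  by move=> x; have [k hk] := exists_good (f x) m0; exists k; apply/forallP.
have [col colP] : {col : T -> 'I_d.+1 | forall x i, good m L (col x) (f x ord0 i)}.
  exists (fun x => xchoose (ex x)) => x; apply/forallP; exact: (xchooseP (ex x)).
pose key x := (col x, [ffun i : 'I_d => Num.floor ((f x ord0 i - sh m (col x)) / L)]).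
pose Rel := [rel x y | (key x == key y) && `[< gdist_le e x y r >]].
have Rsym : connect_sym Rel.
  apply: sym_connect_sym => x y /=; rewrite eq_sym; congr andb.
  by apply/asboolP/asboolP; apply: gdist_le_sym.
have Rkey : forall a b, Rel a b -> key a = key b.
  by move=> a b /andP [/eqP -> _].
have ckey : forall a b, connect Rel a b -> key b = key a.
  move=> a b /connectP [p pp ->].
  by apply: (path_key Rkey pp); rewrite mem_last.
pose cls x := [set y | connect Rel x y].
exists (fun k => [set cls x | x in [set x | col x == k]]).
split.
  move=> x; exists (col x); exists (cls x).
    by apply/imsetP; exists x => //; rewrite inE.
  by rewrite inE connect0.
move=> k; split.
- move=> A B /imsetP [x0 hx0 ->] /imsetP [y0 hy0 ->] neq x y.
  rewrite !inE => cx cy n w.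
  rewrite inE in hx0. rewrite inE in hy0.
  have kx := ckey _ _ cx. have ky := ckey _ _ cy.
  case: (ltrP r n%:R) => hn; first by [].
  exfalso.
  case: (eqVneq (key x) (key y)) => ek.
  + have Rxy : Rel x y.
      by rewrite /= ek eqxx /=; apply/asboolP; exists n.
    move/negP: neq; apply; apply/eqP/setP => z; rewrite !inE.
    have c1 : connect Rel x y by apply: connect1.
    have c2 : connect Rel y y0 by rewrite Rsym.
    have c := connect_trans (connect_trans cx c1) c2.
    by rewrite (same_connect Rsym c).
  + have cxy : col x = col y.
      have := congr1 fst kx; have := congr1 fst ky => /= -> ->.
      by rewrite (eqP hx0) (eqP hy0).
    have [i hi] : exists i, Num.floor ((f x ord0 i - sh m (col x)) / L) !=
                            Num.floor ((f y ord0 i - sh m (col x)) / L).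
      apply/existsP; rewrite -negb_forall; apply: contra ek => /forallP h.
      rewrite /key cxy; apply/eqP; congr pair; apply/ffunP => i; rewrite !ffunE.
      by rewrite -cxy; apply/eqP; exact: h.
    have hy : good m L (col x) (f y ord0 i) by rewrite cxy; exact: colP.
    have h1 := good_sep L0 (colP x i) hy hi.
    have h2 := walk_coord i hedge w.
    have h3 : n%:R * C <= m by rewrite /m ler_pM2r //; lra.
    lra.
- move=> A /imsetP [x0 _ ->] x y; rewrite !inE => cx cy.
  have cxy : connect Rel x y.
    by apply: connect_trans cy; rewrite Rsym.
  case/connectP: cxy => p pp ->.
  case/shortenP: pp => p' pp' up' _.
  have hk := path_key Rkey pp'.
  have hsize : leq (size (x :: p')) (Nb d C r).
    apply: (@packing _ d f (x :: p') (f x) L up').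
    + by move=> z z' _ _; apply: hsep.
    + move=> z i zS; have kz := hk z zS.
      have e1 : col z = col x by have := congr1 fst kz.
      have e2 := congr1 snd kz; move/ffunP: e2 => /(_ i); rewrite !ffunE /= e1 => e2.
      apply: good_same (ltW m0) _ _ e2; first by rewrite -e1.
      exact: colP.
  have [n [w hn]] := path_walk (fun a b (h : Rel a b) => (asboolP _ (proj2 (andP h)) : gdist_le e a b r)) pp'.
  exists n; split => //.
  apply: le_trans hn _; rewrite /Dfun.
  have : (size p')%:R * r <= (Nb d C r)%:R * r.
    rewrite ler_pM2r // ler_nat; apply: leq_trans hsize; exact: leqnSn.
  lra.
Qed.
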